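(* For integers $n\geq 1$ and $r\geq 1$, \[ \sum_{k=0}^n {n \brace k}_r(-1)^{k+r-1}D_{k+r-1}=B_{n-1,r}. \]
   Context: $D_n$ is the $n$-th derangement number. For $r\geq0$, ${n \brace k}_r$ is the $r$-Stirling number of the second kind: the number of partitions of $\{1,\dots,n+r\}$ into $k+r$ nonempty blocks with $1,\dots,r$ in distinct blocks. $B_{n,r}$ is the $r$-Bell number, defined by $\sum_{n\geq0}B_{n,r}\frac{t^n}{n!}=e^{e^t-1+rt}$ (equivalently $B_{n,r}=\sum_k{n\brace k}_r$). *)

(* Defs.v *)
From mathcomp Require Import all_boot all_order all_algebra all_fingroup.
Set Implicit Arguments. Unset Strict Implicit. Unset Printing Implicit Defensive.
Import GRing.Theory.

Definition derangement (n : nat) : nat :=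
  #|[set s : {perm 'I_n} | [forall i, s i != i]]|.

Definition rstirling2 (n k r : nat) : nat :=
  #|[set P : {set {set 'I_(n + r)}} |
      [&& partition P [set: 'I_(n + r)], #|P| == k + r &
          [forall i : 'I_(n + r), forall j : 'I_(n + r),
             [&& i < r, j < r & i != j] ==> (pblock P i != pblock P j)]]]|.

(* r-Bell number B_{n,r} = sum_k {n brace k}_r (blocks number k+r <= n+r). *)
Definition rbell (n r : nat) : nat := \sum_(k < n.+1) rstirling2 n k r.

(* Main.v *)
Require Import Defs.
From mathcomp Require Import all_boot all_order all_algebra all_fingroup.
Set Implicit Arguments. Unset Strict Implicit. Unset Printing Implicit Defensive.
From mathcomp Require Import ring.
Import GRing.Theory.
Local Open Scope ring_scope.
Lemma sum_by_card (T : finType) (S : {set T}) (G : nat -> int) :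
  \sum_(X : {set T} | X \subset S) G #|X| = \sum_(k < #|S|.+1) G k *+ 'C(#|S|, k).
Proof.
rewrite (partition_big (fun X : {set T} => (inord #|X| : 'I_#|S|.+1)) xpredT) //=.
apply: eq_bigr => k _.
rewrite (eq_bigl (fun X : {set T} => (X \subset S) && (#|X| == k))); last first.
  move=> X /=; case XS: (X \subset S) => //=.
  have le := subset_leq_card XS.
  by rewrite -val_eqE /= inordK.
rewrite (eq_bigr (fun _ => G k)); last by move=> X /andP[_ /eqP ->].
by rewrite sumr_const -cards_draws cardsE.
Qed.

Lemma alt_sum (T : finType) (S : {set T}) :
  \sum_(X : {set T} | X \subset S) (-1) ^+ #|X| = (S == set0)%:R :> int.
Proof.
rewrite sum_by_card.
transitivity ((1 - 1 : int) ^+ #|S|).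
  by rewrite exprBn; apply: eq_bigr => i _; rewrite !expr1n !mulr1.
by rewrite subrr expr0n cards_eq0.
Qed.
Lemma alt_sum2 (T : finType) (A C : {set T}) : C \subset A ->
  \sum_(B : {set T} | (B \subset A) && (C \subset B)) (-1) ^+ #|A :\: B| = (C == A)%:R :> int.
Proof.
move=> CA.
have -> : (C == A) = (A :\: C == set0).
  rewrite setD_eq0 eqEsubset CA //.
rewrite -alt_sum [RHS](reindex_onto (fun B => A :\: B) (fun X => A :\: X)) /=; last first.
  move=> X XAC; apply/setP => y; rewrite !inE.
  case yX: (y \in X); rewrite ?andbF /=; last by case: (y \in A).
  by have := subsetP XAC y yX; rewrite !inE => /andP[_ ->].
apply: eq_bigl => B; apply/andP/andP => [[BA CB]|[h1 h2]].
  split.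
    apply/subsetP => y; rewrite !inE => /andP[nyB yA]; rewrite yA andbT.
    by apply: contra nyB; apply: (subsetP CB).
  apply/eqP/setP => y; rewrite !inE; case yB: (y \in B); rewrite /= ?andbF; last by case: (y \in A).
  by rewrite (subsetP BA).
have BA : B \subset A.
  apply/subsetP => y yB; move/eqP/setP: h2 => /(_ y); rewrite !inE yB.
  by case: (y \in A).
split => //; apply/subsetP => y yC; have yA := subsetP CA y yC.
apply: contraT => nyB; have := subsetP h1 y; rewrite !inE yA nyB yC /=.
by move=> /(_ isT).
Qed.

Lemma mobius (T : finType) (h F : {set T} -> int) :
  (forall A, F A = \sum_(B : {set T} | B \subset A) h B) ->
  forall A, h A = \sum_(B : {set T} | B \subset A) (-1) ^+ #|A :\: B| * F B.
Proof.
move=> hF A.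
under eq_bigr => B _ do rewrite hF mulr_sumr.
rewrite (exchange_big_dep (fun C : {set T} => C \subset A)) /=; last first.
  by move=> B C BA CB; apply: subset_trans CB BA.
under eq_bigr => C CA.
  under eq_bigr => B _ do rewrite mulrC.
  rewrite -mulr_sumr (alt_sum2 CA).
  over.
rewrite (bigD1 A) //= eqxx mulr1 big1 ?addr0 //.
by move=> C /andP[_ /negbTE ->]; rewrite mulr0.
Qed.
Lemma perm_on_sum (T : finType) (A : {set T}) :
  #|perm_on A| = (\sum_(B : {set T} | B \subset A)
      #|[set s : {perm T} | [set x | s x != x] == B]|)%N.
Proof.
rewrite -sum1_card (partition_big (fun s : {perm T} => [set x | s x != x])
   (fun B => B \subset A)) /=; last first.
  move=> s sA; apply/subsetP => x; rewrite inE => sx; exact: (subsetP sA x sx).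
apply: eq_bigr => B BA; rewrite sum1dep_card; apply: eq_card => s.
rewrite !inE; case e: ([set x | s x != x] == B); rewrite ?andbF ?andbT //.
apply/subsetP => x; rewrite inE => sx; apply: (subsetP BA).
by rewrite -(eqP e) inE.
Qed.

Definition Eder (n : nat) : int :=
  \sum_(k < n.+1) ((-1) ^+ (n - k) * (k`!)%:R) *+ 'C(n, k).

Lemma der_formula n : (derangement n)%:R = Eder n.
Proof.
pose h (B : {set 'I_n}) : int := (#|[set s : {perm 'I_n} | [set x | s x != x] == B]|)%:R.
pose F (B : {set 'I_n}) : int := (#|B|`!)%:R.
have hF : forall A, F A = \sum_(B : {set 'I_n} | B \subset A) h B.
  by move=> A; rewrite /F -card_perm perm_on_sum natr_sum.
have := mobius hF [set: 'I_n].
have -> : h [set: 'I_n] = (derangement n)%:R.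
  rewrite /h /derangement; congr (_%:R); apply: eq_card => s; rewrite !inE.
  apply/eqP/forallP => [e i|a]; last by apply/setP => i; rewrite !inE a.
  by move: (in_setT i); rewrite -e inE.
move=> ->.
rewrite (eq_bigr (fun B : {set 'I_n} => (-1) ^+ (#|[set: 'I_n]| - #|B|) * (#|B|`!)%:R)); last first.
  by move=> B _; rewrite /F cardsDS ?subsetT // cardsT.
rewrite (sum_by_card [set: 'I_n] (fun k => (-1) ^+ (#|[set: 'I_n]| - k) * (k`!)%:R)).
by rewrite cardsT card_ord.
Qed.

Lemma Eder_rec n : Eder n.+1 = Eder n *+ n.+1 + (-1) ^+ n.+1.
Proof.
rewrite /Eder big_ord_recl /= subn0 fact0 bin0 mulr1n mulr1 addrC.
congr (_ + _); rewrite -sumrMnl; apply: eq_bigr => i _.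
rewrite /bump /= add1n subSS -!mulrnAr; congr (_ * _).
rewrite -!mulrnA; congr (_ *+ _).
rewrite factS mulnAC -mul_bin_diag /=.
by rewrite mulnC (mulnC n.+1).
Qed.

Lemma der_key (j : nat) :
  ((-1) ^+ (j - 1) * (derangement (j - 1))%:R) *+ j
  + (-1) ^+ (j.+1 - 1) * (derangement (j.+1 - 1))%:R = 1 :> int.
Proof.
rewrite !der_formula.
case: j => [|i].
  by rewrite mulr0n add0r /Eder big_ord1 /= !subnn expr0 fact0 bin0 !mul1r mulr1n.
rewrite !subn1 /= Eder_rec.
have s2 : (-1) ^+ i * (-1) ^+ i = 1 :> int by rewrite -exprMn mulrNN mulr1 expr1n.
rewrite -[RHS]s2 exprS.
ring.
Qed.
Section Part.
Variable T : finType.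
Implicit Types (P Q : {set {set T}}) (B C D R : {set T}).

Definition spec R P :=
  [forall i, forall j, [&& i \in R, j \in R & i != j] ==> (pblock P i != pblock P j)].
Definition valid R D P := partition P D && spec R P.

Lemma specP R P :
  reflect (forall i j, i \in R -> j \in R -> i != j -> pblock P i != pblock P j)
          (spec R P).
Proof.
apply: (iffP forallP) => [h i j iR jR ij | h i].
  by move/forallP: (h i) => /(_ j); rewrite iR jR ij.
by apply/forallP => j; apply/implyP => /and3P[iR jR ij]; apply: h.
Qed.

Lemma spec_trans R P Q (f : {set T} -> {set T}) :
  (forall i, i \in R -> f (pblock Q i) = pblock P i) -> spec R P -> spec R Q.
Proof.
move=> hf /specP sP; apply/specP => i j iR jR ij.
apply: contra (sP i j iR jR ij) => /eqP e.
by rewrite -(hf i iR) -(hf j jR) e.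
Qed.

Lemma pb_D1 P B i : trivIset P -> i \in cover P -> i \notin B ->
  pblock (P :\ B) i = pblock P i.
Proof.
move=> tP iP iB; apply: def_pblock; last by rewrite mem_pblock.
  exact: trivIsetD.
rewrite !inE pblock_mem // andbT; apply: contraNneq iB => <-.
by rewrite mem_pblock.
Qed.

Lemma pb_U1 P B i : trivIset (B |: P) -> i \in cover P ->
  pblock (B |: P) i = pblock P i.
Proof.
move=> tP iP; apply: def_pblock => //; last by rewrite mem_pblock.
by rewrite setU1r // pblock_mem.
Qed.

Variable x : T.

Definition phi P := [set B :\ x | B in P].
Definition psi P C := (x |: C) |: (P :\ C).

Lemma phi_valid R D P : x \in D -> x \notin R -> R \subset D ->
  valid R D P -> [set x] \notin P -> valid R (D :\ x) (phi P).
Proof.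
move=> xD xR RD /andP[pP sP] xP.
have tP := partition_trivIset pP; have cP := cover_partition pP.
have n0 : set0 \notin phi P.
  apply/imsetP => -[B BP e].
  have : B \subset [set x] by rewrite -setD_eq0 -e.
  rewrite subset1 => /orP[/eqP eB|/eqP eB].
    by move: xP; rewrite -eB BP.
  by move: (partition_neq0 pP BP); rewrite eB eqxx.
have [tQ _] : trivIset (phi P) /\ {in P &, injective (fun B => B :\ x)}.
  apply: trivIimset => // B B' BP B'P ne.
  apply: (disjointWl (subsetDl B [set x])); apply: (disjointWr (subsetDl B' [set x])).
  by move/trivIsetP: tP => tP; apply: tP => //; rewrite eq_sym.
have cQ : cover (phi P) = D :\ x.
  rewrite cover_imset; apply/setP => y; apply/bigcupP/idP => [[B BP]|].
    rewrite !inE => /andP[yx yB]; rewrite yx -cP /=.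
    by apply/bigcupP; exists B.
  rewrite !inE => /andP[yx yD]; exists (pblock P y).
    by rewrite pblock_mem // cP.
  by rewrite !inE yx mem_pblock cP.
have pbQ i : i \in D -> i != x -> pblock (phi P) i = pblock P i :\ x.
  move=> iD ix; apply: def_pblock => //.
    by apply: imset_f; rewrite pblock_mem // cP.
  by rewrite !inE ix mem_pblock cP.
apply/andP; split.
  by rewrite /partition cQ eqxx tQ n0.
apply/specP => i j iR jR ij.
have iD := subsetP RD i iR; have jD := subsetP RD j jR.
have ix : i != x by apply: contraNneq xR => <-.
have jx : j != x by apply: contraNneq xR => <-.
rewrite (pbQ i iD ix) (pbQ j jD jx).
apply: contra ((specP _ _ sP) i j iR jR ij) => /eqP e.
have : j \in pblock P i :\ x by rewrite e !inE jx mem_pblock cP.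
rewrite !inE => /andP[_ ji].
by rewrite eq_sym (same_pblock tP ji).
Qed.

Lemma psi_valid R D P C : x \in D -> x \notin R -> R \subset D ->
  valid R (D :\ x) P -> C \in P ->
  valid R D (psi P C) && ([set x] \notin psi P C).
Proof.
move=> xD xR RD /andP[pP sP] CP.
have tP := partition_trivIset pP; have cP := cover_partition pP.
have CD := partitionS pP CP.
have xC : x \notin C by apply: contraT => /negPn /(subsetP CD); rewrite !inE eqxx.
have pQ : partition (psi P C) D.
  have p1 := partitionD1 pP CP.
  have ne : x |: C != set0 by apply/set0Pn; exists x; rewrite setU11.
  have dis : [disjoint x |: C & (D :\ x) :\: C].
    rewrite -setI_eq0; apply/eqP/setP => y; rewrite !inE.
    by case: (y == x); case: (y \in C); rewrite ?andbF.
  have := partitionU1 p1 ne dis.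
  have -> : (x |: C) :|: ((D :\ x) :\: C) = D.
    apply/setP => y; rewrite !inE.
    case yx: (y == x); first by rewrite (eqP yx) xD.
    case yC: (y \in C) => //=.
    by have := subsetP CD y yC; rewrite !inE yx.
  by [].
have tQ := partition_trivIset pQ.
apply/andP; split; first (apply/andP; split => //).
  apply: (spec_trans (f := fun B => B :\ x)) sP => i iR.
  have iD := subsetP RD i iR.
  have ix : i != x by apply: contraNneq xR => <-.
  have iP : i \in cover P by rewrite cP !inE ix.
  case iC: (i \in C).
    rewrite (def_pblock tP CP iC) (def_pblock tQ (setU11 _ _) (setU1r _ iC)).
    by rewrite setU1K.
  have bP : pblock P i \in P :\ C.
    rewrite !inE pblock_mem // andbT; apply: contraFneq iC => <-.
    by rewrite mem_pblock.
  rewrite (def_pblock tQ (setU1r _ bP) (_ : i \in pblock P i)); last by rewrite mem_pblock.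
  apply/setP => y; rewrite !inE; case yx: (y == x) => //=.
  have : pblock P i \subset D :\ x by apply: (partitionS pP); rewrite pblock_mem.
  by move/subsetP/(_ y); rewrite (eqP yx) !inE eqxx /= => h; apply/esym/negbTE; apply: contraT => /negPn /h.
rewrite !inE negb_or; apply/andP; split.
  apply/negP => /eqP e.
  have /set0Pn [c cC] := partition_neq0 pP CP.
  have : c \in [set x] by rewrite e setU1r.
  rewrite inE => /eqP ec; move: cC; rewrite ec; apply/negP; exact: xC.
apply/negP => /andP[_ xP].
have : x \in cover P by apply/bigcupP; exists [set x] => //; rewrite inE.
by rewrite cP !inE eqxx.
Qed.
Lemma phi_psi R D P C : x \in D -> valid R (D :\ x) P -> C \in P ->
  trivIset (psi P C) -> phi (psi P C) = P /\ pblock (psi P C) x :\ x = C.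
Proof.
move=> xD /andP[pP _] CP tQ.
have cP := cover_partition pP.
have CD := partitionS pP CP.
have xC : x \notin C by apply: contraT => /negPn /(subsetP CD); rewrite !inE eqxx.
split; last by rewrite (def_pblock tQ (setU11 _ _) (setU11 _ _)) setU1K.
rewrite /phi /psi imsetU1 setU1K //.
rewrite (eq_in_imset (g := id)) ?imset_id ?setD1K //.
move=> B; rewrite !inE => /andP[_ BP] /=.
have xB : x \notin B.
  apply: contraT => /negPn xB.
  have : x \in cover P by apply/bigcupP; exists B.
  by rewrite cP !inE eqxx.
apply/setP => y; rewrite !inE; case yx: (y == x) => //=.
by rewrite (eqP yx) (negbTE xB).
Qed.

Lemma psi_phi R D P : x \in D -> valid R D P -> [set x] \notin P ->
  psi (phi P) (pblock P x :\ x) = P.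
Proof.
move=> xD /andP[pP _] xP.
have tP := partition_trivIset pP; have cP := cover_partition pP.
have xc : x \in cover P by rewrite cP.
have BxP := pblock_mem xc.
have xBx : x \in pblock P x by rewrite mem_pblock.
rewrite /psi setD1K ?inE ?eqxx //.
have -> : phi P :\ (pblock P x :\ x) = P :\ pblock P x.
  apply/setP => B'; rewrite !inE.
  apply/andP/andP => [[ne /imsetP[B BP eB]] | [ne B'P]].
    have xB : x \notin B.
      apply: contraNN ne => xB; rewrite eB (def_pblock tP BP xB) //.
    have -> : B' = B.
      rewrite eB; apply/setP => y; rewrite !inE; case yx: (y == x) => //=.
      by rewrite (eqP yx) (negbTE xB).
    split => //; apply: contraNneq xB => ->; exact: xBx.
  have xB : x \notin B'.
    by apply: contraNN ne => xB; rewrite (def_pblock tP B'P xB).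
  have eB : B' :\ x = B'.
    apply/setP => y; rewrite !inE; case yx: (y == x) => //=.
    by rewrite (eqP yx) (negbTE xB).
  split; last by apply/imsetP; exists B'.
  apply/negP => /eqP e.
  have /set0Pn [y yB] := partition_neq0 pP B'P.
  have yBx : y \in pblock P x by move: yB; rewrite e !inE => /andP[].
  move: ne; rewrite -(def_pblock tP B'P yB) -(def_pblock tP BxP yBx).
  by rewrite eqxx.
by rewrite setD1K.
Qed.

Lemma card_psi R D P C : valid R (D :\ x) P -> C \in P -> #|psi P C| = #|P|.
Proof.
move=> /andP[pP _] CP.
have cP := cover_partition pP.
rewrite /psi cardsU1 [in RHS](cardsD1 C) CP.
suff -> : (x |: C) \notin P :\ C by [].
rewrite !inE negb_and; apply/orP; right; apply/negP => xCP.
have : x \in cover P by apply/bigcupP; exists (x |: C) => //; rewrite setU11.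
by rewrite cP !inE eqxx.
Qed.

End Part.
Definition W (T : finType) (R D : {set T}) (g : nat -> int) :=
  \sum_(P : {set {set T}} | valid R D P) g #|P|.

Section Step.
Variables (T : finType) (R D : {set T}) (x : T) (g : nat -> int).
Hypotheses (xD : x \in D) (xR : x \notin R) (RD : R \subset D).

Lemma caseA :
  \sum_(P : {set {set T}} | valid R D P && ([set x] \in P)) g #|P|
  = \sum_(P : {set {set T}} | valid R (D :\ x) P) g #|P|.+1.
Proof.
rewrite (reindex_onto (fun P => [set x] |: P) (fun P => P :\ [set x])) /=; last first.
  by move=> P /andP[_ xP]; rewrite setD1K.
have xP P : valid R (D :\ x) P -> [set x] \notin P.
  move=> /andP[pP _]; apply/negP => xP.
  have : x \in cover P by apply/bigcupP; exists [set x] => //; rewrite inE.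
  by rewrite (cover_partition pP) !inE eqxx.
apply: eq_big => [P|P /andP[_ /eqP e]]; last first.
  have nP : [set x] \notin P by rewrite -e !inE eqxx.
  by rewrite cardsU1 nP add1n.
rewrite setU11 andbT; apply/andP/idP => [[vQ /eqP e] | vP].
  rewrite -e; move: vQ => /andP[pQ sQ]; apply/andP; split.
    exact: partitionD1 pQ (setU11 _ _).
  apply: (spec_trans (f := id)) sQ => i iR /=.
  have ix : i \notin [set x] by rewrite inE; apply: contraNneq xR => <-.
  apply: pb_D1 => //; first exact: partition_trivIset pQ.
  by rewrite (cover_partition pQ) (subsetP RD).
have nP := xP P vP.
move: vP => /andP[pP sP].
have pQ : partition ([set x] |: P) D.
  have ne : [set x] != set0 by apply/set0Pn; exists x; rewrite inE.
  have dis : [disjoint [set x] & D :\ x] by rewrite disjoints1 !inE eqxx.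
  by have := partitionU1 pP ne dis; rewrite setD1K.
split; last by rewrite setU1K.
apply/andP; split => //.
apply: (spec_trans (f := id)) sP => i iR /=.
apply: pb_U1; first exact: partition_trivIset pQ.
rewrite (cover_partition pP) !inE (subsetP RD) // andbT.
by apply: contraNneq xR => <-.
Qed.

Lemma caseB :
  \sum_(P : {set {set T}} | valid R D P && ([set x] \notin P)) g #|P|
  = \sum_(P : {set {set T}} | valid R (D :\ x) P) g #|P| *+ #|P|.
Proof.
transitivity (\sum_(P : {set {set T}} | valid R (D :\ x) P) \sum_(C in P) g #|P|); last first.
  by apply: eq_bigr => P _; rewrite sumr_const.
rewrite pair_big_dep /=.
rewrite (reindex_onto (fun p : {set {set T}} * {set T} => psi x p.1 p.2)
   (fun P => (phi x P, pblock P x :\ x))) /=; last first.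
  by move=> P /andP[vP xP]; rewrite (psi_phi xD vP xP).
rewrite (eq_bigl (fun p => valid R (D :\ x) p.1 && (p.2 \in p.1))).
  by apply: eq_bigr => -[P C] /= /andP[vP CP]; rewrite (card_psi vP CP).
move=> [P C] /=.
apply/andP/andP => [[h /eqP e] | [vP CP]].
  move: h => /andP[vQ xQ]; move: e => [e1 e2].
  suff: valid R (D :\ x) (phi x (psi x P C)) /\
        pblock (psi x P C) x :\ x \in phi x (psi x P C) by rewrite e1 e2.
  split; first exact: (phi_valid xD xR RD vQ xQ).
  apply: imset_f; apply: pblock_mem.
  by move: vQ => /andP[pQ _]; rewrite (cover_partition pQ).
have /andP[vQ xQ] := psi_valid xD xR RD vP CP.
split; first by rewrite vQ xQ.
have tQ : trivIset (psi x P C) by move: vQ => /andP[pQ _]; exact: partition_trivIset pQ.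
by have [-> ->] := phi_psi xD vP CP tQ.
Qed.

Lemma W_step : W R D g = W R (D :\ x) (fun j => g j *+ j + g j.+1).
Proof.
rewrite /W (bigID (fun P : {set {set T}} => [set x] \in P)) /= caseA caseB addrC -big_split /=.
by apply: eq_bigr => P _.
Qed.
End Step.
Lemma W_inj (T U : finType) (f : T -> U) (injf : injective f) (R D : {set T}) g :
  R \subset D -> W (f @: R) (f @: D) g = W R D g.
Proof.
move=> RD.
have fRD : f @: R \subset f @: D by apply: imsetS.
rewrite /W (reindex_onto (fun P : {set {set T}} => [set f @: (B : {set T}) | B in P])
   (fun Q : {set {set U}} => [set f @^-1: (B : {set U}) | B in Q])) /=; last first.
  move=> Q /andP[pQ _]; rewrite -imset_comp.
  rewrite (eq_in_imset (g := id)) ?imset_id // => B BQ /=.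
  have BD := partitionS pQ BQ.
  apply/setP => y; apply/imsetP/idP => [[z] | yB].
    by rewrite inE => fz ->.
  have := subsetP BD y yB; case/imsetP => z _ e.
  by exists z; rewrite // inE -e.
have PsiPhi (P : {set {set T}}) :
    [set f @^-1: (B : {set U}) | B in [set f @: (B : {set T}) | B in P]] = P.
  rewrite -imset_comp (eq_in_imset (g := id)) ?imset_id // => B _ /=.
  by apply/setP => z; rewrite inE mem_imset.
apply: eq_big => [P|P _]; last by rewrite card_imset //; apply: imset_inj.
rewrite PsiPhi eqxx andbT /valid imset_partition //.
case pP: (partition P D) => //=.
have tP := partition_trivIset pP; have cP := cover_partition pP.
have pb i : i \in R -> pblock [set f @: (B : {set T}) | B in P] (f i) = f @: pblock P i.
  move=> iR; have iD : i \in cover P by rewrite cP (subsetP RD).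
  apply: def_pblock.
  - by rewrite imset_trivIset.
  - by apply: imset_f; apply: pblock_mem.
  - by apply: imset_f; rewrite mem_pblock.
apply/specP/specP => h.
  move=> i j iR jR ij.
  have := h (f i) (f j) (imset_f _ iR) (imset_f _ jR).
  rewrite (inj_eq injf) !pb // => /(_ ij).
  by apply: contra => /eqP ->.
move=> u v /imsetP[i iR ->] /imsetP[j jR ->] uv.
rewrite !pb // (inj_eq (imset_inj injf)); apply: h => //.
by apply: contraNneq uv => ->.
Qed.

Lemma W_shift N r g : (r <= N)%N ->
  W [set i : 'I_N.+1 | (i < r)%N] (setT :\ ord_max) g = W [set i : 'I_N | (i < r)%N] setT g.
Proof.
move=> rN.
have injw : injective (widen_ord (leqnSn N)).
  by move=> a b /(congr1 val) /= /val_inj.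
rewrite -(W_inj injw) ?subsetT //; congr W.
  apply/setP => y; rewrite !inE; apply/idP/imsetP => [yr | [z]].
    have yN : (y < N)%N by apply: leq_trans yr rN.
    by exists (Ordinal yN); rewrite ?inE //; apply: val_inj.
  by rewrite inE => zr ->.
apply/setP => y; rewrite !inE andbT; apply/idP/imsetP => [yN | [z _ ->]].
  have yN' : (y < N)%N.
    have := ltn_ord y; rewrite ltnS leq_eqVlt => /orP[/eqP e|] //.
    by move: yN; rewrite -val_eqE /= e eqxx.
  by exists (Ordinal yN'); rewrite ?inE //; apply: val_inj.
by rewrite -val_eqE /= neq_ltn ltn_ord.
Qed.
Lemma bounds N r (D : {set 'I_N}) P : (r <= N)%N ->
  [set i : 'I_N | (i < r)%N] \subset D -> valid [set i : 'I_N | (i < r)%N] D P ->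
  (r <= #|P| <= #|D|)%N.
Proof.
move=> rN RD /andP[pP sP].
have cP := cover_partition pP.
apply/andP; split.
  pose h (i : 'I_r) := pblock P (widen_ord rN i).
  have hinj : injective h.
    move=> a b e; apply/eqP; apply: contraT => ab.
    have wR (c : 'I_r) : widen_ord rN c \in [set i : 'I_N | (i < r)%N] by rewrite inE /=.
    have : widen_ord rN a != widen_ord rN b by rewrite -val_eqE /= val_eqE.
    by move/((specP _ _ sP) _ _ (wR a) (wR b)); rewrite /h in e; rewrite e eqxx.
  have := card_imset [set: 'I_r] hinj; rewrite cardsT card_ord => <-.
  apply: subset_leq_card; apply/subsetP => _ /imsetP[i _ ->].
  apply: pblock_mem; rewrite cP; apply: (subsetP RD); rewrite inE /=.
  exact: ltn_ord.
rewrite (card_partition pP) -sum1_card; apply: leq_sum => B BP.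
by rewrite card_gt0 (partition_neq0 pP BP).
Qed.

Lemma spec_ord N r (P : {set {set 'I_N}}) :
  spec [set i : 'I_N | (i < r)%N] P =
  [forall i : 'I_N, forall j : 'I_N, [&& (i < r)%N, (j < r)%N & i != j] ==> (pblock P i != pblock P j)].
Proof. by apply: eq_forallb => i; apply: eq_forallb => j; rewrite !inE. Qed.

Lemma rst_W n r (G : nat -> int) :
  \sum_(k < n.+1) (rstirling2 n k r)%:Z * G (k + r)%N
  = W [set i : 'I_(n + r) | (i < r)%N] setT G.
Proof.
symmetry; rewrite /W.
have rN : (r <= n + r)%N by rewrite leq_addl.
rewrite (partition_big (fun P : {set {set 'I_(n + r)}} => (inord (#|P| - r) : 'I_n.+1)) xpredT) //=.
apply: eq_bigr => k _.
have key P : valid [set i : 'I_(n + r) | (i < r)%N] setT P ->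
    (inord (#|P| - r) == k :> 'I_n.+1) = (#|P| == k + r)%N.
  move=> vP; have /andP[b1 b2] := bounds rN (subsetT _) vP.
  move: b2; rewrite cardsT card_ord => b2.
  rewrite -val_eqE /= inordK; last by rewrite ltnS leq_subLR [(r + n)%N]addnC.
  apply/eqP/eqP => [<-|->]; first by rewrite subnK.
  by rewrite addnK.
rewrite (eq_bigr (fun _ => G (k + r)%N)); last first.
  by move=> P /andP[vP]; rewrite key // => /eqP ->.
rewrite sumr_const -mulr_natl natz; congr (Posz _ * _).
rewrite /rstirling2; apply: eq_card => P; rewrite !inE.
rewrite -topredE /=.
case vP: (valid _ setT P); last first.
  by move: vP; rewrite /valid spec_ord; case: (partition P setT); case: (#|P| == k + r)%N => //= ->.
rewrite key //; move: vP; rewrite /valid spec_ord => /andP[-> ->].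
by rewrite andbT.
Qed.
Lemma der_keyZ (j : nat) :
  ((-1) ^+ (j - 1) * (derangement (j - 1))%:Z) *+ j
  + (-1) ^+ (j.+1 - 1) * (derangement (j.+1 - 1))%:Z = 1 :> int.
Proof. by rewrite -!natz der_key. Qed.

Lemma step_final N r g : (r <= N)%N ->
  W [set i : 'I_N.+1 | (i < r)%N] setT g
  = W [set i : 'I_N | (i < r)%N] setT (fun j => g j *+ j + g j.+1).
Proof.
move=> rN; rewrite -[RHS]W_shift // (@W_step 'I_N.+1 [set i : 'I_N.+1 | (i < r)%N] setT ord_max g) //.
by rewrite inE /= -leqNgt.
Qed.

Theorem corollary1 (n r : nat) (hn : (1 <= n)%N) (hr : (1 <= r)%N) :
  \sum_(k < n.+1)
     (rstirling2 n k r)%:Z * (-1) ^+ (k + r - 1) * (derangement (k + r - 1))%:Z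
  = (rbell (n - 1) r)%:Z.
Proof.
case: n hn => // m _.
pose g (j : nat) : int := (-1) ^+ (j - 1) * (derangement (j - 1))%:Z.
rewrite (eq_bigr (fun k : 'I_m.+2 => (rstirling2 m.+1 k r)%:Z * g (k + r)%N)); last first.
  by move=> k _; rewrite /g -mulrA.
rewrite rst_W.
have rN : (r <= m + r)%N by rewrite leq_addl.
rewrite (step_final g rN).
rewrite (_ : W _ _ _ = W [set i : 'I_(m + r) | (i < r)%N] setT (fun _ => 1)); last first.
  by apply: eq_bigr => P _; rewrite /g der_keyZ.
rewrite subn1 /= -(rst_W m r (fun _ => 1)).
rewrite /rbell -natz natr_sum; apply: eq_bigr => k _.
by rewrite mulr1 natz.
Qed.
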